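(* Let $m>n>0$ be relatively prime integers with $(m,n)\neq(2,1)$, and $(r,s)\in\mathbb{Z}^2$. Then $(r,s)=\beta(m,n)$ if and only if $(r+s,\,-s)=\beta(m,\,m-n)$.
   Context: For relatively prime integers $a>b>0$, $\beta(a,b)$ denotes the Bézout coefficients given by the Euclidean algorithm: with $a=q_1b+r_1$, $b=q_2r_1+r_2$, $\dots$, $r_{k-2}=q_kr_{k-1}+r_k$, $r_{k-1}=1$, $r_k=0$ ($r_{-1}=a$, $r_0=b$), write $\begin{pmatrix}a\\ b\end{pmatrix}=M\begin{pmatrix}1\\0\end{pmatrix}$ with $M=\prod_{i=1}^k\begin{pmatrix}q_i&1\\1&0\end{pmatrix}$; then $\beta(a,b)$ is the first row of $M^{-1}$, and $\beta(a,b)=(r,s)$ satisfies $ra+sb=1$. *)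

(* Defs.v *)
From HB Require Import structures.
From mathcomp Require Import all_boot all_order all_algebra.
Set Implicit Arguments. Unset Strict Implicit. Unset Printing Implicit Defensive.
Import GRing.Theory Num.Theory.
Local Open Scope ring_scope.

(* Quotients q_1, ..., q_k of the Euclidean algorithm on (a, b):
   a = q_1 b + r_1, b = q_2 r_1 + r_2, ..., stopping when the remainder is 0.
   [fuel] bounds the number of steps (b.+1 steps always suffice). *)
Fixpoint euclid_quots (fuel a b : nat) : seq nat :=
  match fuel with
  | O => [::]
  | S f => if b == 0%N then [::] else (a %/ b)%N :: euclid_quots f b (a %% b)%N
  end.

Definition qmx (q : int) : 'M[int]_2 :=
  \matrix_(i < 2, j < 2)
    (if (i == 0) && (j == 0) then q
     else if (i == 1) && (j == 1) then 0 else 1).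

Definition euclid_mx (a b : nat) : 'M[int]_2 :=
  \big[mulmx/1%:M]_(q <- euclid_quots b.+1 a b) qmx q%:Z.

Definition beta (a b : nat) : int * int :=
  let Mi := invmx (euclid_mx a b) in (Mi 0 0, Mi 0 1).

(* Main.v *)
Require Import Defs.
From mathcomp Require Import all_boot all_order all_algebra.
From mathcomp Require Import zify.
Local Open Scope ring_scope.
Import GRing.Theory.

Lemma quots_fuel (f1 f2 a b : nat) : (b < f1)%N -> (b < f2)%N ->
  euclid_quots f1 a b = euclid_quots f2 a b.
Proof.
elim: f1 f2 a b => [|f1 IH] [|f2] a b //= h1 h2.
case: eqP => // /eqP b0; congr (_ :: _); apply: IH.
  by apply: leq_trans (ltn_pmod _ _) _; rewrite ?lt0n.
by apply: leq_trans (ltn_pmod _ _) _; rewrite ?lt0n.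
Qed.

Definition Lmx : 'M[int]_2 :=
  \matrix_(i < 2, j < 2) (if i == 0 then (if j == 0 then 1 else 0)
                         else (if j == 0 then 1 else -1)).

Ltac mxcase := apply/matrixP; case=> [[|[|?]] ?] //; case=> [[|[|?]] ?] //;
  rewrite !mxE ?big_ord_recl ?big_ord0 ?mxE /=.

Lemma qmx_step (q : nat) : qmx (1%N)%:Z *m qmx q%:Z = Lmx *m qmx q.+1%:Z.
Proof. mxcase; rewrite ?mxE /=; lia. Qed.

Lemma LL : Lmx *m Lmx = 1%:M.
Proof. mxcase; lia. Qed.

Lemma qmx_unit (q : int) : qmx q \in unitmx.
Proof.
have h : qmx q *m (\matrix_(i < 2, j < 2)
   (if (i == 0) && (j == 0) then 0 else if (i == 1) && (j == 1) then - q else 1)) = 1%:M.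
  by mxcase; lia.
by case: (mulmx1_unit h).
Qed.

Lemma euclid_unit a b : euclid_mx a b \in unitmx.
Proof.
rewrite /euclid_mx; elim: (euclid_quots _ _ _) => [|x l IH].
  by rewrite big_nil unitmx1.
by rewrite big_cons unitmx_mul qmx_unit IH.
Qed.

Lemma key (m n : nat) :
  (0 < n)%N -> (n < m)%N -> coprime m n -> (m, n) <> (2%N, 1%N) ->
  euclid_mx m (m - n) = Lmx *m euclid_mx m n.
Proof.
move=> n0 nm cop ne.
have mn0 : (m - n != 0)%N by rewrite subn_eq0 -ltnNge.
have mE : m = (n + (m - n))%N by rewrite subnKC // ltnW.
rewrite /euclid_mx.
have [lt2|ge2] := ltnP m (n.*2).
-
  have hmn : (m - n < n)%N by lia.
  have d1 : (m %/ n = 1)%N.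
    by rewrite {1}mE divnDl // divnn n0 divn_small.
  have r1 : (m %% n = m - n)%N by rewrite {1}mE modnDl modn_small.
  have d2 : (m %/ (m - n) = (n %/ (m - n)).+1)%N.
    by rewrite {1}mE addnC divnDl // divnn lt0n mn0 add1n.
  have r2 : (m %% (m - n) = n %% (m - n))%N.
    by rewrite {1}mE addnC modnDl.
  have -> : euclid_quots n.+1 m n =
     1%N :: (n %/ (m - n))%N :: euclid_quots n.-1 (m - n) (n %% (m - n)).
    have n0' : (n == 0)%N = false by rewrite eqn0Ngt n0.
    rewrite /= n0' d1 r1.
    rewrite -{1}(prednK n0) /= (negbTE mn0) //.
  rewrite /= (negbTE mn0) d2 r2.
  rewrite (quots_fuel (m - n)%N n.-1); last 2 first.
  + by rewrite ltn_pmod // lt0n.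
  + apply: leq_trans (ltn_pmod _ _) _; [by rewrite lt0n | lia].
  by rewrite !big_cons (mulmxA (qmx _) (qmx _)) qmx_step !mulmxA LL mul1mx.
-
  have hmn : (n < m - n)%N.
    have : (m != n.*2)%N.
      apply/eqP => e; move: cop; rewrite e -mul2n /coprime gcdnC gcdnMl => /eqP n1.
      by apply: ne; rewrite e n1.
    lia.
  have d1 : (m %/ n = ((m - n) %/ n).+1)%N.
    by rewrite {1}mE divnDl // divnn n0 add1n.
  have r1 : (m %% n = (m - n) %% n)%N by rewrite {1}mE modnDl.
  have d2 : (m %/ (m - n) = 1)%N.
    by rewrite {1}mE addnC divnDl // divnn lt0n mn0 divn_small.
  have r2 : (m %% (m - n) = n)%N by rewrite {1}mE addnC modnDl modn_small.
  have n0' : (n == 0)%N = false by rewrite eqn0Ngt n0.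
  have -> : euclid_quots (m - n).+1 m (m - n) =
     1%N :: ((m - n) %/ n)%N :: euclid_quots (m - n).-1 n ((m - n) %% n).
    rewrite /= (negbTE mn0) d2 r2.
    case: (m - n)%N hmn mn0 => // k _ _ /=.
    by rewrite n0'.
  rewrite /= n0' d1 r1.
  rewrite (quots_fuel (m - n)%N.-1 n); last 2 first.
  + apply: leq_trans (ltn_pmod _ _) _; [by [] | lia].
  + by rewrite ltn_pmod.
  by rewrite !big_cons (mulmxA (qmx _) (qmx _)) qmx_step -mulmxA.
Qed.

Theorem lemma2p5 (m n : nat) :
  (0 < n)%N -> (n < m)%N -> coprime m n -> (m, n) <> (2%N, 1%N) ->
  forall r s : int,
    (r, s) = beta m n <-> (r + s, - s) = beta m (m - n).
Proof.
move=> n0 nm cop ne r s.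
have hinv : invmx (euclid_mx m (m - n)) = invmx (euclid_mx m n) *m Lmx.
  rewrite key //.
  set M := euclid_mx m n.
  have uM : M \in unitmx by apply: euclid_unit.
  have uA : Lmx *m M \in unitmx by rewrite -key //; apply: euclid_unit.
  have h1 : (invmx M *m Lmx) *m (Lmx *m M) = 1%:M.
    by rewrite mulmxA -(mulmxA (invmx M)) LL mulmx1 mulVmx.
  by rewrite -[LHS]mul1mx -h1 -mulmxA mulmxV // mulmx1.
rewrite /beta hinv !mxE !big_ord_recl !big_ord0 !mxE /=.
have -> : lift ord0 (ord0 : 'I_1) = 1 :> 'I_2 by apply/val_inj.
set a := invmx (euclid_mx m n) 0 0; set b := invmx (euclid_mx m n) 0 1.
split; case=> e1 e2; congr pair; lia.
Qed.
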